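(* Let $\mathcal{S}=(S,\overline{S})$ be a bisection of minimal potential. Then for all $x\in S$ and $y\in\overline{S}$, $$\mathrm{def}_{\mathcal{S}}(x)+\mathrm{def}_{\mathcal{S}}(y)+2W(x,y)\ge a_x-a_y.$$
   Context: $G$ is a finite simple undirected graph with an odd number $n$ of vertices, each vertex $x$ having stubbornness $\alpha_x\in(0,1)$ and $a_x=\lfloor\alpha_x/(1-\alpha_x)\rfloor$. For vertex sets $A,B$, $W(A,B)$ is the number of edges with one endpoint in $A$ and the other in $B$ (so $W(x,y)=1$ iff $x,y$ are adjacent). A bisection $(S,\overline{S})$ partitions the vertices with $|S|=\frac{n+1}{2}$, $|\overline{S}|=\frac{n-1}{2}$. Deficiency: $\mathrm{def}_{\mathcal{S}}(x)=W(x,S)-W(x,\overline{S})$ for $x\in S$, and $W(x,\overline{S})-W(x,S)$ for $x\in\overline{S}$. Potential: $\Phi(S,\overline{S})=W(S,\overline{S})+\frac12\big(\sum_{x\in S}a_x-\sum_{y\in\overline{S}}a_y\big)$. $\mathcal{S}$ has minimal potential if $\Phi(S,\overline{S})\le\Phi(S\setminus\{x\}\cup\{y\},\overline{S}\setminus\{y\}\cup\{x\})$ for all $x\in S$, $y\in\overline{S}$. *)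

(* Defs.v *)
From mathcomp Require Import all_boot all_order all_algebra.
Set Implicit Arguments. Unset Strict Implicit. Unset Printing Implicit Defensive.
Import Order.TTheory GRing.Theory Num.Theory.
Local Open Scope ring_scope.

Definition simple_graph (T : finType) (e : rel T) : Prop :=
  symmetric e /\ irreflexive e.

(* W(A,B): number of edges with one endpoint in A and the other in B,
   counted as ordered pairs (u,v) with u in A, v in B, u ~ v.
   (Used only for disjoint A, B, where this is exactly the edge count.) *)
Definition W (T : finType) (e : rel T) (A B : {set T}) : nat :=
  #|[set p : T * T | [&& p.1 \in A, p.2 \in B & e p.1 p.2]]|.

Definition a_of (R : archiRealFieldType) (alpha : R) : int :=
  Num.floor (alpha / (1 - alpha)).

Definition bisection (T : finType) (S : {set T}) : Prop :=
  (#|S| = (#|T|).+1./2)%N.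

Definition deficiency (T : finType) (e : rel T) (S : {set T}) (x : T) : int :=
  if x \in S then (W e [set x] S)%:Z - (W e [set x] (~: S))%:Z
  else (W e [set x] (~: S))%:Z - (W e [set x] S)%:Z.

Definition potential (R : archiRealFieldType) (T : finType) (e : rel T)
    (alpha : T -> R) (S : {set T}) : R :=
  (W e S (~: S))%:R
  + 2^-1 * ((\sum_(x in S) a_of (alpha x))%:~R
             - (\sum_(y in ~: S) a_of (alpha y))%:~R).

Definition minimal_potential (R : archiRealFieldType) (T : finType) (e : rel T)
    (alpha : T -> R) (S : {set T}) : Prop :=
  forall x y, x \in S -> y \notin S ->
    potential e alpha S <= potential e alpha (y |: (S :\ x)).

(* Main.v *)
Require Import Defs.
From mathcomp Require Import all_boot all_order all_algebra zify ring lra.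
Import Order.TTheory GRing.Theory Num.Theory.

Lemma W_sum (T : finType) (e : rel T) (A B : {set T}) :
  W e A B = (\sum_(u in A) \sum_(v in B) (e u v : nat))%N.
Proof.
rewrite /W -sum1_card pair_big_dep /=.
rewrite [RHS]big_mkcond /= [LHS]big_mkcond /=.
apply: eq_bigr => [[u v]] _; rewrite !inE /=.
by case: (u \in A); case: (v \in B); case: (e u v).
Qed.

Lemma WU1l (T : finType) (e : rel T) a (A B : {set T}) : a \notin A ->
  W e (a |: A) B = (W e [set a] B + W e A B)%N.
Proof. by move=> h; rewrite !W_sum big_setU1 //= big_set1. Qed.

Lemma WU1r (T : finType) (e : rel T) a (A B : {set T}) : a \notin B ->
  W e A (a |: B) = (W e A [set a] + W e A B)%N.
Proof.
move=> h; rewrite !W_sum -big_split /=; apply: eq_bigr => u _.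
by rewrite big_setU1 //= big_set1.
Qed.

Lemma W11 (T : finType) (e : rel T) a b : W e [set a] [set b] = e a b.
Proof. by rewrite W_sum !big_set1. Qed.

Lemma Wsym (T : finType) (e : rel T) (A B : {set T}) : symmetric e -> W e A B = W e B A.
Proof.
move=> hs; rewrite !W_sum exchange_big /=; apply: eq_bigr => u _.
by apply: eq_bigr => v _; rewrite hs.
Qed.

Local Open Scope ring_scope.

Theorem lemma2 (R : archiRealFieldType) (T : finType) (e : rel T) (alpha : T -> R)
  (Hg : simple_graph e) (Hodd : odd #|T|)
  (Halpha : forall x, 0 < alpha x < 1)
  (S : {set T}) (HS : bisection S) (Hmin : minimal_potential e alpha S) :
  forall x y, x \in S -> y \notin S ->
    deficiency e S x + deficiency e S y + 2 * (W e [set x] [set y])%:Z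
      >= a_of (alpha x) - a_of (alpha y).
Proof.
move=> x y xS yS.
case: Hg => hs hi.
have := Hmin x y xS yS; rewrite /potential.
set S0 := S :\ x; set C0 := ~: S :\ y.
have x0 : x \notin S0 by rewrite !inE eqxx.
have y0 : y \notin C0 by rewrite !inE eqxx.
have yS0 : y \notin S0 by rewrite !inE (negbTE yS) andbF.
have xC0 : x \notin C0 by rewrite !inE xS andbF.
have eS : S = x |: S0 by rewrite setD1K.
have eC : ~: S = y |: C0 by rewrite setD1K // inE.
have yx : y != x by apply: contraNneq yS => ->.
have eC' : ~: (y |: S0) = x |: C0.
  apply/setP => z; rewrite !inE.
  case: (eqVneq z x) => [->|zx]; first by rewrite xS eq_sym (negbTE yx).
  by case: (eqVneq z y) => [->|zy] //=; rewrite ?(negbTE yS) //; case: (z \in S).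
rewrite eC'.
have sumS : (\sum_(z in S) a_of (alpha z) =
      a_of (alpha x) + \sum_(z in S0) a_of (alpha z))%R.
  by rewrite {1}eS big_setU1.
have sumC : (\sum_(z in ~: S) a_of (alpha z) =
      a_of (alpha y) + \sum_(z in C0) a_of (alpha z))%R.
  by rewrite {1}eC big_setU1.
rewrite sumS sumC !big_setU1 //=.
set ax := a_of (alpha x); set ay := a_of (alpha y).
set As := \sum_(z in S0) _; set Ac := \sum_(z in C0) _.
set c := W e S (~: S); set c' := W e (y |: S0) (x |: C0).
move=> H.
have H2 : (c%:Z)%:~R <= (c'%:Z + ay - ax)%:~R :> R.
  rewrite !rmorphD rmorphN /=.
  have e1 : (c%:Z)%:~R = c%:R :> R by [].
  have e2 : (c'%:Z)%:~R = c'%:R :> R by [].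
  rewrite e1 e2; move: H; rewrite !rmorphD /=. lra.
rewrite ler_int in H2.
rewrite /c /c' in H2; rewrite /deficiency xS (negbTE yS) eC eS in H2 *.
rewrite !WU1l // !WU1r // !W11 in H2 *.
rewrite (@Wsym _ _ S0 [set x] hs) (@Wsym _ _ S0 [set y] hs) (hs y x) !hi in H2 *.
move: H2; rewrite /ax /ay; lia.
Qed.
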